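(* Let $c>0$, $f>0$, $d\in\mathbb R$ and $n\ge 1$. Let $\eta$ be a real function that is continuously differentiable on a neighbourhood of $0$ in $H^2$, with $\eta$ and $\partial_t\eta$ bounded there. Define, for $v>0$, $$\chi(t,v)=\frac{c}{v}\exp\!\Big(-\frac{f}{v^{2}}\,(t+d\,v^n)^2\Big)+\eta(t,v),$$ and $\chi(t,0)=\eta(t,0)$ for $t\neq0$. Then there exist $\omega>0$ and a sufficiently small $\mathcal U$ such that $\chi\in\Psi_1^\omega(\mathcal U)$, where the function $\nu(t)$ in condition 2 of the definition can be chosen such that $\nu(t)^{-1}\to 0$ as $|t|\to 0$.
   Context: Let $H^2=\{(t,v)\in\mathbb R^2: v\ge 0\}$. $\mathcal U\subseteq H^2$ denotes the intersection of an open neighbourhood of $0\in\mathbb R^2$ with $H^2$, and $\mathcal U^*=\mathcal U\setminus\{0\}$. For $\omega>0$, $\Psi_1^\omega(\mathcal U)$ denotes the set of continuous real-valued functions $\chi$ on $\mathcal U^*$ such that: 1. $\chi$ is continuously differentiable on $\{(t,v)\in\mathcal U^*: v\neq 0\}$; 2. there is a function $t\mapsto\nu(t)>0$ (defined for $t\neq 0$) such that $|\chi(t,v)|\le\omega$ for all $(t,v)\in\mathcal U^*$ with $0\le v<|t|/\nu(t)$; 3. there are positive constants $c,K_1,K_2,\epsilon$ such that for all $(t,v)\in\mathcal U^*$ with $v\neq 0$: $\left|\chi(0,v)-\frac{c}{v}\right|<\frac{K_1}{v^{1-\epsilon}}$ (whenever $(0,v)\in\mathcal U^*$) and $\left|\frac{\partial}{\partial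 t}\chi(t,v)\right|<\frac{K_2}{v^2}$. (The constant $c$ in condition 3 is any positive constant, not necessarily the $c$ in the formula for $\chi$. Interpretation: $v=L^{-D}$, $t=(T-T_c(\infty))/T_c(\infty)$ measures the distance to the infinite-volume transition point, and the peak location converges as $|T_c(L)-T_c(\infty)|\le C L^{-m}$ with $m=nD\ge D$.) *)

(* Defs.v *)
From Stdlib Require Import Reals.
From Coquelicot Require Import Coquelicot.
Open Scope R_scope.

Definition open2 (O : R -> R -> Prop) : Prop :=
  forall t v, O t v -> exists r, 0 < r /\
    forall t' v', Rabs (t' - t) < r -> Rabs (v' - v) < r -> O t' v'.

Definition H2 (t v : R) : Prop := 0 <= v.

Definition is_U (U : R -> R -> Prop) : Prop :=
  exists O, open2 O /\ O 0 0 /\ forall t v, U t v <-> (O t v /\ H2 t v).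

Definition Ustar (U : R -> R -> Prop) (t v : R) : Prop :=
  U t v /\ ~ (t = 0 /\ v = 0).

Definition cont2_at (g : R -> R -> R) (t v : R) : Prop :=
  forall eps, 0 < eps -> exists delta, 0 < delta /\
    forall t' v', Rabs (t' - t) < delta -> Rabs (v' - v) < delta ->
      Rabs (g t' v' - g t v) < eps.

Definition cont_on (S : R -> R -> Prop) (g : R -> R -> R) : Prop :=
  forall t v, S t v -> forall eps, 0 < eps -> exists delta, 0 < delta /\
    forall t' v', S t' v' -> Rabs (t' - t) < delta -> Rabs (v' - v) < delta ->
      Rabs (g t' v' - g t v) < eps.

Definition dt (g : R -> R -> R) (t v : R) : R := Derive (fun x => g x v) t.
Definition dv (g : R -> R -> R) (t v : R) : R := Derive (fun y => g t y) v.

Definition C1_on (S : R -> R -> Prop) (g : R -> R -> R) : Prop :=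
  forall t v, S t v ->
    ex_derive (fun x => g x v) t /\ ex_derive (fun y => g t y) v /\
    cont2_at (dt g) t v /\ cont2_at (dv g) t v.

(* The class Psi_1^omega(U), with the function nu of condition 2 exposed. *)
Definition Psi1_with (omega : R) (U : R -> R -> Prop) (chi : R -> R -> R)
    (nu : R -> R) : Prop :=
  cont_on (Ustar U) chi /\
  C1_on (fun t v => Ustar U t v /\ v <> 0) chi /\
  (forall t, t <> 0 -> 0 < nu t) /\
  (forall t v, Ustar U t v -> t <> 0 -> 0 <= v -> v < Rabs t / nu t ->
     Rabs (chi t v) <= omega) /\
  (exists c K1 K2 eps, 0 < c /\ 0 < K1 /\ 0 < K2 /\ 0 < eps /\
     forall t v, Ustar U t v -> v <> 0 ->
       (Ustar U 0 v -> Rabs (chi 0 v - c / v) < K1 / Rpower v (1 - eps)) /\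
       Rabs (dt chi t v) < K2 / v ^ 2).

Definition Psi1 (omega : R) (U : R -> R -> Prop) (chi : R -> R -> R) : Prop :=
  exists nu, Psi1_with omega U chi nu.

(* The function chi of the statement: for v > 0 the Gaussian peak plus eta,
   and eta(t,0) on the boundary (values for v < 0 are irrelevant). *)
Definition chi_of (c f d n : R) (eta : R -> R -> R) (t v : R) : R :=
  if Rlt_dec 0 v then
    c / v * exp (- (f / v ^ 2) * (t + d * Rpower v n) ^ 2) + eta t v
  else eta t v.

(* Main.v *)
Require Import Defs.
From Stdlib Require Import Reals Lra.
From Coquelicot Require Import Coquelicot.
Open Scope R_scope.

Lemma cont2_bridge g t v : continuity_2d_pt g t v -> cont2_at g t v.
Proof.
  intros H eps Heps. destruct (H (mkposreal eps Heps)) as [[dl Hd] Hdl].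
  exists dl; split; auto.
Qed.

Lemma bridge_cont2 g t v : cont2_at g t v -> continuity_2d_pt g t v.
Proof.
  intros H [eps Heps]. destruct (H eps Heps) as [dl [Hd Hdl]].
  exists (mkposreal dl Hd); auto.
Qed.

Lemma cpt_of_ex_derive h x : ex_derive h x -> continuity_pt h x.
Proof. intros H. apply continuity_pt_filterlim. apply (ex_derive_continuous h x H). Qed.

Lemma c2_pow g t v k : continuity_2d_pt g t v ->
  continuity_2d_pt (fun a b => g a b ^ k) t v.
Proof.
  intros H. induction k.
  - apply continuity_2d_pt_ext with (f := fun _ _ => 1).
    + intros; simpl; reflexivity.
    + apply continuity_2d_pt_const.
  - apply continuity_2d_pt_ext with (f := fun a b => g a b * g a b ^ k).
    + intros; simpl; reflexivity.
    + apply continuity_2d_pt_mult; auto.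
Qed.

Lemma c2_exp g t v : continuity_2d_pt g t v ->
  continuity_2d_pt (fun a b => exp (g a b)) t v.
Proof.
  intros H. apply continuity_1d_2d_pt_comp; auto.
  apply cpt_of_ex_derive. auto_derive. auto.
Qed.

Lemma c2_ln g t v : continuity_2d_pt g t v -> 0 < g t v ->
  continuity_2d_pt (fun a b => ln (g a b)) t v.
Proof.
  intros H Hp. apply continuity_1d_2d_pt_comp; auto.
  apply cpt_of_ex_derive. auto_derive. auto.
Qed.

Lemma c2_div g h t v : continuity_2d_pt g t v -> continuity_2d_pt h t v ->
  h t v <> 0 -> continuity_2d_pt (fun a b => g a b / h a b) t v.
Proof.
  intros. unfold Rdiv. apply continuity_2d_pt_mult; auto.
  apply continuity_2d_pt_inv; auto.
Qed.

Ltac c2 := repeat first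
  [ apply continuity_2d_pt_const
  | apply continuity_2d_pt_id1
  | apply continuity_2d_pt_id2
  | apply continuity_2d_pt_plus
  | apply continuity_2d_pt_minus
  | apply continuity_2d_pt_mult
  | apply continuity_2d_pt_opp
  | apply c2_div
  | apply continuity_2d_pt_inv
  | apply c2_pow
  | apply c2_exp
  | apply c2_ln ].

Definition G (c f d n : R) (t v : R) : R :=
  c / v * exp (- (f / v ^ 2) * (t + d * Rpower v n) ^ 2).

Definition Gt (c f d n : R) (t v : R) : R :=
  c / v * exp (- (f / v ^ 2) * (t + d * Rpower v n) ^ 2) *
  (- (f / v ^ 2) * (2 * (t + d * Rpower v n))).

Definition Gv (c f d n : R) (t v : R) : R :=
  - c / v ^ 2 * exp (- (f / v ^ 2) * (t + d * Rpower v n) ^ 2) +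
  c / v * exp (- (f / v ^ 2) * (t + d * Rpower v n) ^ 2) *
  (2 * f / v ^ 3 * (t + d * Rpower v n) ^ 2
   - (f / v ^ 2) * (2 * (t + d * Rpower v n)) * (d * (n * Rpower v n / v))).

Lemma G_dt c f d n t v : 0 < v -> is_derive (fun x => G c f d n x v) t (Gt c f d n t v).
Proof.
  intros Hv. unfold G, Gt. auto_derive.
  - lra.
  - simpl. unfold Rdiv. field. lra.
Qed.

Lemma G_dv c f d n t v : 0 < v -> is_derive (fun y => G c f d n t y) v (Gv c f d n t v).
Proof.
  intros Hv. unfold G, Gv, Rpower. auto_derive.
  - repeat split; try lra; nra.
  - simpl. unfold Rdiv. field. lra.
Qed.

Lemma G_cont c f d n t v : 0 < v -> continuity_2d_pt (G c f d n) t v.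
Proof. intros Hv. unfold G, Rpower. c2; simpl; try lra; try (intro; nra). Qed.
Lemma Gt_cont c f d n t v : 0 < v -> continuity_2d_pt (Gt c f d n) t v.
Proof. intros Hv. unfold Gt, Rpower. c2; simpl; try lra; try (intro; nra). Qed.
Lemma Gv_cont c f d n t v : 0 < v -> continuity_2d_pt (Gv c f d n) t v.
Proof. intros Hv. unfold Gv, Rpower. c2; simpl; try lra; try (intro; nra). all: apply Rgt_not_eq; apply Rlt_gt; repeat apply Rmult_lt_0_compat; lra. Qed.
Lemma C1_cont O (eta : R -> R -> R) t v : open2 O -> C1_on O eta -> O t v ->
  continuity_2d_pt eta t v.
Proof.
  intros HO HC Htv [eps Heps]. simpl.
  destruct (HO t v Htv) as [r [Hr HrO]].
  destruct (HC t v Htv) as [_ [Hexv [Hct _]]].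
  destruct (Hct 1 Rlt_0_1) as [d1 [Hd1 Hd1b]].
  set (M := Rabs (dt eta t v) + 1).
  assert (HM : 0 < M) by (unfold M; pose proof (Rabs_pos (dt eta t v)); lra).
  pose proof (cpt_of := fun h x (H : ex_derive h x) =>
     proj2 (continuity_pt_filterlim h x) (ex_derive_continuous h x H)).
  destruct (cpt_of _ _ Hexv (eps/2) ltac:(lra)) as [d2 [Hd2 Hd2b]].
  assert (Hd3 : 0 < eps / (2 * M)) by (apply Rdiv_lt_0_compat; lra).
  set (dl := Rmin (Rmin r d1) (Rmin d2 (eps / (2*M)))).
  assert (Hdl : 0 < dl) by (unfold dl; repeat apply Rmin_pos; lra).
  exists (mkposreal dl Hdl). simpl. intros u w Hu Hw.
  assert (Hdl1 : dl <= r) by (unfold dl; eapply Rle_trans; [apply Rmin_l|apply Rmin_l]).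
  assert (Hdl2 : dl <= d1) by (unfold dl; eapply Rle_trans; [apply Rmin_l|apply Rmin_r]).
  assert (Hdl3 : dl <= d2) by (unfold dl; eapply Rle_trans; [apply Rmin_r|apply Rmin_l]).
  assert (Hdl4 : dl <= eps / (2*M)) by (unfold dl; eapply Rle_trans; [apply Rmin_r|apply Rmin_r]).
  assert (Hpt : forall x, Rmin t u <= x <= Rmax t u ->
     O x w /\ Rabs (dt eta x w) <= M).
  { intros x Hx.
    assert (Hxt : Rabs (x - t) < dl).
    { unfold Rmin, Rmax in Hx. destruct (Rle_dec t u);
      apply Rabs_def1; apply Rabs_def2 in Hu; lra. }
    split.
    - apply HrO; lra.
    - specialize (Hd1b x w ltac:(lra) ltac:(lra)).
      unfold M. pose proof (Rabs_triang_inv (dt eta x w) (dt eta t v)). lra. }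
  destruct (MVT_gen (fun x => eta x w) t u (fun x => dt eta x w)) as [cc [Hcc Heq]].
  - intros x Hx. destruct (Hpt x ltac:(lra)) as [HOx _].
    destruct (HC x w HOx) as [Hex _]. unfold dt.
    apply Derive_correct. exact Hex.
  - intros x Hx. destruct (Hpt x Hx) as [HOx _].
    destruct (HC x w HOx) as [Hex _]. apply cpt_of. exact Hex.
  - destruct (Hpt cc Hcc) as [_ Hb].
    assert (H1 : Rabs (eta u w - eta t w) <= eps / 2).
    { rewrite Heq, Rabs_mult.
      apply Rle_trans with (M * dl).
      - apply Rmult_le_compat; try apply Rabs_pos; lra.
      - apply Rle_trans with (M * (eps / (2*M))).
        + apply Rmult_le_compat_l; lra.
        + right. field. lra. }
    assert (H2 : Rabs (eta t w - eta t v) < eps / 2).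
    { destruct (Req_dec w v) as [->|Hne].
      - rewrite Rminus_eq_0, Rabs_R0. lra.
      - apply Hd2b. split.
        + unfold D_x, no_cond. split; auto.
        + simpl. unfold R_dist. lra. }
    replace (eta u w - eta t v) with ((eta u w - eta t w) + (eta t w - eta t v)) by ring.
    pose proof (Rabs_triang (eta u w - eta t w) (eta t w - eta t v)). lra.
Qed.

Lemma exp_mono x y : x <= y -> exp x <= exp y.
Proof. intros [H|H]. - left; apply exp_increasing; auto. - subst; lra. Qed.

Lemma exp_neg_le y : 0 <= y -> exp (- y) * (1 + y) <= 1.
Proof.
  intros Hy. rewrite exp_Ropp. pose proof (exp_ineq1_le y). pose proof (exp_pos y).
  apply Rmult_le_reg_l with (exp y); auto.
  rewrite <- Rmult_assoc, Rinv_r by lra. lra.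
Qed.

Lemma ln_nonpos v : 0 < v <= 1 -> ln v <= 0.
Proof.
  intros Hv. destruct (Req_dec v 1) as [->|Hne]. - rewrite ln_1; lra.
  - left. rewrite <- ln_1. apply ln_increasing; lra.
Qed.

Lemma Rpower_le_v v n : 0 < v <= 1 -> 1 <= n -> Rpower v n <= v.
Proof.
  intros Hv Hn. unfold Rpower. rewrite <- (exp_ln v) at 2 by lra.
  apply exp_mono. pose proof (ln_nonpos v Hv). nra.
Qed.

Lemma Rpower_pos v n : 0 < Rpower v n.
Proof. unfold Rpower. apply exp_pos. Qed.

Lemma gauss_bound c f d n t v a : 0 < c -> 0 < f -> 1 <= n -> 0 < v <= 1 ->
  0 < a <= Rabs t -> Rabs d * v <= a / 2 ->
  0 < G c f d n t v <= 4 * c * v / (f * a ^ 2).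
Proof.
  intros Hc Hf Hn Hv Ha Hdv. unfold G.
  set (P := Rpower v n). set (A := t + d * P).
  assert (HP : 0 < P <= v) by (split; [apply Rpower_pos | apply Rpower_le_v; auto]).
  assert (HA : a / 2 <= Rabs A).
  { unfold A. pose proof (Rabs_triang_inv t (- (d * P))).
    replace (t - - (d * P)) with (t + d * P) in H by ring.
    rewrite Rabs_Ropp, Rabs_mult, (Rabs_pos_eq P) in H by lra.
    pose proof (Rabs_pos d). nra. }
  assert (HA2 : a ^ 2 / 4 <= A ^ 2).
  { rewrite <- (pow2_abs A). replace (a^2/4) with (a/2*(a/2)) by field.
    replace (Rabs A ^2) with (Rabs A * Rabs A) by ring.
    apply Rmult_le_compat; lra. }
  set (y := f / v ^ 2 * A ^ 2).
  assert (Hy : 0 <= y) by (unfold y; apply Rmult_le_pos; [apply Rlt_le, Rdiv_lt_0_compat; [lra| apply pow_lt; lra] | apply pow2_ge_0]).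
  replace (- (f / v ^ 2) * A ^ 2) with (- y) by (unfold y; ring).
  pose proof (exp_neg_le y Hy) as HE. pose proof (exp_pos (- y)) as HE0.
  set (E := exp (- y)) in *.
  assert (Hv2 : 0 < v ^ 2) by (apply pow_lt; lra).
  assert (Hyv : y * v ^ 2 = f * A ^ 2) by (unfold y; field; lra).
  assert (HEy : E * (f * a ^ 2) <= 4 * v ^ 2).
  { assert (E * y <= 1) by nra.
    assert (E * y * v ^ 2 <= v ^ 2) by nra.
    rewrite Rmult_assoc, Hyv in H0.
    assert (E*f*(a^2/4) <= E*f*A^2) by (apply Rmult_le_compat_l; [apply Rmult_le_pos|]; lra).
    lra. }
  split.
  - apply Rmult_lt_0_compat; auto. apply Rdiv_lt_0_compat; lra.
  - assert (Hfa : 0 < f * a ^ 2) by (apply Rmult_lt_0_compat; [lra| apply pow_lt; lra]).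
    assert (Hk : 0 < c / (v * (f * a ^ 2))) by (apply Rdiv_lt_0_compat; [lra|apply Rmult_lt_0_compat; lra]).
    replace (c / v * E) with (c / (v * (f * a ^ 2)) * (E * (f * a ^ 2))) by (field; lra).
    apply Rle_trans with (c / (v * (f * a ^ 2)) * (4 * v ^ 2)).
    + apply Rmult_le_compat_l; lra.
    + right. field. lra.
Qed.

Lemma Gt_bound c f d n t v : 0 < c -> 0 < f -> 0 < v ->
  Rabs (Gt c f d n t v) <= 2 * c * (f + 1) / v ^ 2.
Proof.
  intros Hc Hf Hv. unfold Gt.
  set (A := t + d * Rpower v n).
  set (X := A / v).
  assert (HAX : A = X * v) by (unfold X; field; lra).
  set (y := f * X ^ 2).
  assert (Hy : 0 <= y) by (unfold y; apply Rmult_le_pos; [lra| apply pow2_ge_0]).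
  replace (- (f / v ^ 2) * A ^ 2) with (- y) by (unfold y; rewrite HAX; field; lra).
  pose proof (exp_neg_le y Hy) as HE. pose proof (exp_pos (- y)) as HE0.
  set (E := exp (- y)) in *.
  replace (c / v * E * (- (f / v ^ 2) * (2 * A))) with (- (2 * c * f * (E * X)) / v ^ 2)
    by (rewrite HAX; field; lra).
  assert (Hv2 : 0 < v ^ 2) by (apply pow_lt; lra).
  unfold Rdiv. rewrite Rabs_mult, Rabs_Ropp, (Rabs_pos_eq (/ v ^ 2)) by (apply Rlt_le, Rinv_0_lt_compat; lra).
  apply Rmult_le_compat_r; [apply Rlt_le, Rinv_0_lt_compat; lra|].
  rewrite Rabs_mult, (Rabs_pos_eq (2 * c * f)) by nra.
  rewrite Rabs_mult, (Rabs_pos_eq E) by lra.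
  assert (HX : f * Rabs X <= (f + 1) * (1 + y)).
  { unfold y. rewrite <- (pow2_abs X). pose proof (Rabs_pos X).
    assert (0 <= f * ((Rabs X - 1) * (Rabs X - 1))) by (apply Rmult_le_pos; [lra| apply Rle_0_sqr]).
    assert (0 <= f * f * (Rabs X * Rabs X)) by (apply Rmult_le_pos; [nra| apply Rle_0_sqr]).
    simpl. nra. }
  assert (f * (E * Rabs X) <= f + 1).
  { apply Rle_trans with (E * ((f + 1) * (1 + y))). - nra. - nra. }
  nra.
Qed.

Lemma locally_pos v : 0 < v -> locally v (fun y => 0 < y).
Proof.
  intros Hv. exists (mkposreal (v/2) ltac:(lra)). intros y Hy.
  change (Rabs (y - v) < v / 2) in Hy. apply Rabs_def2 in Hy. lra.
Qed.

Lemma chi_pos c f d n eta t v : 0 < v ->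
  chi_of c f d n eta t v = G c f d n t v + eta t v.
Proof. intros Hv. unfold chi_of, G. destruct (Rlt_dec 0 v); [reflexivity| lra]. Qed.

Lemma chi_nonpos c f d n eta t v : ~ 0 < v -> chi_of c f d n eta t v = eta t v.
Proof. intros Hv. unfold chi_of. destruct (Rlt_dec 0 v); [contradiction| reflexivity]. Qed.

Lemma dt_chi c f d n eta t v : 0 < v -> ex_derive (fun x => eta x v) t ->
  ex_derive (fun x => chi_of c f d n eta x v) t /\
  dt (chi_of c f d n eta) t v = Gt c f d n t v + dt eta t v.
Proof.
  intros Hv He.
  assert (Hext : forall x, G c f d n x v + eta x v = chi_of c f d n eta x v)
    by (intros; rewrite chi_pos; auto).
  assert (HG : ex_derive (fun x => G c f d n x v) t) by (eexists; apply G_dt; auto).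
  split.
  - eapply ex_derive_ext; [exact Hext|]. apply (ex_derive_plus _ _ _ HG He).
  - unfold dt. transitivity (Derive (fun x => G c f d n x v + eta x v) t).
    { symmetry. apply Derive_ext. exact Hext. }
    rewrite (Derive_plus (fun x => G c f d n x v) (fun x => eta x v)); auto.
    rewrite (is_derive_unique _ _ _ (G_dt c f d n t v Hv)). reflexivity.
Qed.

Lemma dv_chi c f d n eta t v : 0 < v -> ex_derive (fun y => eta t y) v ->
  ex_derive (fun y => chi_of c f d n eta t y) v /\
  dv (chi_of c f d n eta) t v = Gv c f d n t v + dv eta t v.
Proof.
  intros Hv He.
  assert (Hext : locally v (fun y => G c f d n t y + eta t y = chi_of c f d n eta t y)).
  { destruct (locally_pos v Hv) as [e He']. exists e. intros y Hy.
    rewrite chi_pos; auto. }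
  assert (HG : ex_derive (fun y => G c f d n t y) v) by (eexists; apply G_dv; auto).
  split.
  - eapply ex_derive_ext_loc; [exact Hext|]. apply (ex_derive_plus _ _ _ HG He).
  - unfold dv. transitivity (Derive (fun y => G c f d n t y + eta t y) v).
    { symmetry. apply Derive_ext_loc. exact Hext. }
    rewrite (Derive_plus (fun y => G c f d n t y) (fun y => eta t y)); auto.
    rewrite (is_derive_unique _ _ _ (G_dv c f d n t v Hv)). reflexivity.
Qed.

Lemma min_lt x a b : x < Rmin a b -> x < a /\ x < b.
Proof. intros H. pose proof (Rmin_l a b). pose proof (Rmin_r a b). lra. Qed.

Lemma div_lt_of X K Q : 0 < Q -> X * Q < K -> X < K / Q.
Proof.
  intros HQ H. apply Rmult_lt_reg_r with Q; auto.
  unfold Rdiv. rewrite Rmult_assoc, Rinv_l by lra. lra.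
Qed.

Lemma Rpower_le1 v a : 0 < v <= 1 -> 0 <= a -> Rpower v a <= 1.
Proof.
  intros Hv Ha. unfold Rpower. rewrite <- exp_0. apply exp_mono.
  pose proof (ln_nonpos v Hv). nra.
Qed.

Theorem lemma2 (c f d n : R) (eta : R -> R -> R)
  (hc : 0 < c) (hf : 0 < f) (hn : 1 <= n)
  (heta : exists O, open2 O /\ O 0 0 /\ C1_on O eta /\
     exists B, forall t v, O t v -> H2 t v ->
       Rabs (eta t v) <= B /\ Rabs (dt eta t v) <= B) :
  exists omega, 0 < omega /\
  exists U, is_U U /\
  exists nu, Psi1_with omega U (chi_of c f d n eta) nu /\
    (forall e, 0 < e -> exists delta, 0 < delta /\
       forall t, 0 < Rabs t < delta -> Rabs (/ nu t) < e).
Proof.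
  destruct heta as [O [HO [HO0 [HC [B HB]]]]].
  assert (HB0 : forall t v, O t v -> 0 <= v ->
    Rabs (eta t v) <= Rabs B /\ Rabs (dt eta t v) <= Rabs B).
  { intros t v Htv Hv. destruct (HB t v Htv Hv) as [H1 H2].
    pose proof (Rle_abs B). split; lra. }
  assert (HBp : 0 <= Rabs B) by apply Rabs_pos.
  assert (Hcf : 0 < 4 * c / f) by (apply Rdiv_lt_0_compat; lra).
  assert (Hd0 : 0 <= Rabs d) by apply Rabs_pos.
  exists (4 * c / f + Rabs B + 1). split; [lra|].
  exists (fun t v => (O t v /\ Rabs t < 1 /\ Rabs v < 1) /\ 0 <= v). split.
  { exists (fun t v => O t v /\ Rabs t < 1 /\ Rabs v < 1). split; [|split].
    - intros t v [Htv [Ht Hv]]. destruct (HO t v Htv) as [r [Hr HrO]].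
      exists (Rmin r (Rmin (1 - Rabs t) (1 - Rabs v))). split.
      + repeat apply Rmin_pos; lra.
      + intros t' v' H1 H2. apply min_lt in H1 as [H1 H1']. apply min_lt in H1' as [H1' _].
        apply min_lt in H2 as [H2 H2']. apply min_lt in H2' as [_ H2'].
        split; [apply HrO; auto|].
        pose proof (Rabs_triang (t' - t) t). pose proof (Rabs_triang (v' - v) v).
        replace (t' - t + t) with t' in * by ring. replace (v' - v + v) with v' in * by ring.
        lra.
    - split; [auto|]. rewrite Rabs_R0. lra.
    - intros t v. unfold H2. tauto. }
  exists (fun t => (1 + 2 * Rabs d) / Rabs t).
  split; [split; [|split; [|split; [|split]]]|].
  -
    intros t v [[[Htv [Ht1 Hv1]] Hv0] Hnz] eps Heps.
    destruct (Rlt_dec 0 v) as [Hvp|Hvn].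
    + assert (Hc2 : continuity_2d_pt (chi_of c f d n eta) t v).
      { apply continuity_2d_pt_ext_loc with (f := fun u w => G c f d n u w + eta u w).
        - exists (mkposreal (v/2) ltac:(lra)). intros u w Hu Hw. simpl in Hw.
          symmetry. apply chi_pos. apply Rabs_def2 in Hw. lra.
        - apply continuity_2d_pt_plus. apply G_cont; auto. apply (C1_cont O); auto. }
      destruct (Hc2 (mkposreal eps Heps)) as [[dl Hdl] Hd].
      exists dl. split; [exact Hdl|]. intros u w _ Hu Hw. apply Hd; auto.
    + assert (v = 0) by lra. subst v.
      assert (Ht0 : t <> 0) by tauto.
      pose proof (Rabs_pos_lt t Ht0) as Hta.
      set (a := Rabs t / 2).
      assert (Ha : 0 < a) by (unfold a; lra).
      destruct (C1_cont O eta t 0 HO HC Htv (mkposreal (eps/2) ltac:(lra))) as [[d1 Hd1] Hd1b].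
      simpl in Hd1b.
      set (K := eps * f * a ^ 2 / (8 * c)).
      assert (HK : 0 < K) by (unfold K; apply Rdiv_lt_0_compat; [repeat apply Rmult_lt_0_compat; try lra; apply pow_lt; lra| lra]).
      assert (Hq : 0 < a / (2 * (Rabs d + 1))) by (apply Rdiv_lt_0_compat; lra).
      exists (Rmin (Rmin d1 a) (Rmin (Rmin 1 (a / (2 * (Rabs d + 1)))) K)).
      split; [repeat apply Rmin_pos; lra|].
      intros u w [[[Huw [Hu1 Hw1]] Hw0] _] Hu Hw.
      apply min_lt in Hu as [Hu _]. apply min_lt in Hu as [Hud1 Hua].
      apply min_lt in Hw as [HwA HwB]. apply min_lt in HwA as [Hwd1 _].
      apply min_lt in HwB as [HwC HwK]. apply min_lt in HwC as [Hw1' Hwq].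
      rewrite Rminus_0_r in *. rewrite Rabs_pos_eq in Hw1', Hwq, HwK by lra.
      rewrite (chi_nonpos c f d n eta t 0) by lra.
      specialize (Hd1b u w Hud1 ltac:(rewrite Rminus_0_r; auto)).
      destruct (Rlt_dec 0 w) as [Hwp|Hwn].
      * rewrite chi_pos by auto.
        assert (Hau : a <= Rabs u).
        { pose proof (Rabs_triang_inv t (t - u)). replace (t - (t - u)) with u in H by ring.
          rewrite <- Rabs_Ropp in Hua. replace (- (u - t)) with (t - u) in Hua by ring.
          unfold a in *. lra. }
        assert (Hdw : Rabs d * w <= a / 2).
        { assert (w * (2 * (Rabs d + 1)) < a).
          { apply Rmult_lt_reg_r with (/ (2 * (Rabs d + 1))).
            - apply Rinv_0_lt_compat; lra.
            - rewrite Rmult_assoc, Rinv_r by lra. rewrite Rmult_1_r. exact Hwq. }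
          nra. }
        destruct (gauss_bound c f d n u w a hc hf hn ltac:(lra) ltac:(lra) Hdw) as [Gp Gb].
        assert (HGe : 4 * c * w / (f * a ^ 2) < eps / 2).
        { assert (Hfa : 0 < f * a ^ 2) by (apply Rmult_lt_0_compat; [lra|apply pow_lt; lra]).
          replace (eps / 2) with (4 * c * K / (f * a ^ 2)) by (unfold K; field; lra).
          unfold Rdiv. apply Rmult_lt_compat_r; [apply Rinv_0_lt_compat; lra|]. nra. }
        replace (G c f d n u w + eta u w - eta t 0) with (G c f d n u w + (eta u w - eta t 0)) by ring.
        pose proof (Rabs_triang (G c f d n u w) (eta u w - eta t 0)).
        rewrite (Rabs_pos_eq (G c f d n u w)) in H by lra. lra.
      * rewrite chi_nonpos by auto. lra.
  -
    intros t v [[[[Htv [Ht1 Hv1]] Hv0] Hnz] Hvne].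
    assert (Hvp : 0 < v) by lra.
    destruct (HC t v Htv) as [Hext [Hexv [Hct Hcv]]].
    destruct (dt_chi c f d n eta t v Hvp Hext) as [Ht' _].
    destruct (dv_chi c f d n eta t v Hvp Hexv) as [Hv' _].
    destruct (HO t v Htv) as [r [Hr HrO]].
    assert (Hloc : locally_2d (fun u w => 0 < w /\ O u w) t v).
    { exists (mkposreal (Rmin r (v/2)) ltac:(apply Rmin_pos; lra)). simpl.
      intros u w Hu Hw. apply min_lt in Hu as [Hu _]. apply min_lt in Hw as [Hw Hw2].
      split; [apply Rabs_def2 in Hw2; lra| apply HrO; auto]. }
    split; [auto|split; [auto|split]].
    + apply cont2_bridge.
      apply continuity_2d_pt_ext_loc with (f := fun u w => Gt c f d n u w + dt eta u w).
      * eapply locally_2d_impl; [|exact Hloc]. apply locally_2d_forall.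
        intros u w [Hw Huw]. symmetry. destruct (HC u w Huw) as [He _].
        apply (proj2 (dt_chi c f d n eta u w Hw He)).
      * apply continuity_2d_pt_plus. apply Gt_cont; auto. apply bridge_cont2; auto.
    + apply cont2_bridge.
      apply continuity_2d_pt_ext_loc with (f := fun u w => Gv c f d n u w + dv eta u w).
      * eapply locally_2d_impl; [|exact Hloc]. apply locally_2d_forall.
        intros u w [Hw Huw]. symmetry. destruct (HC u w Huw) as [_ [He _]].
        apply (proj2 (dv_chi c f d n eta u w Hw He)).
      * apply continuity_2d_pt_plus. apply Gv_cont; auto. apply bridge_cont2; auto.
  - intros t Ht. apply Rdiv_lt_0_compat; [lra| apply Rabs_pos_lt; auto].
  -
    intros t v [[[Htv [Ht1 Hv1]] Hv0] _] Ht0 _ Hvlt.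
    pose proof (Rabs_pos_lt t Ht0) as Hta.
    replace (Rabs t / ((1 + 2 * Rabs d) / Rabs t)) with (Rabs t * Rabs t / (1 + 2 * Rabs d)) in Hvlt
      by (field; lra).
    assert (Hv2 : v * (1 + 2 * Rabs d) < Rabs t * Rabs t).
    { apply Rmult_lt_reg_r with (/ (1 + 2 * Rabs d)); [apply Rinv_0_lt_compat; lra|].
      rewrite Rmult_assoc, Rinv_r, Rmult_1_r by lra. exact Hvlt. }
    destruct (Rlt_dec 0 v) as [Hvp|Hvn].
    + rewrite chi_pos by auto.
      rewrite Rabs_pos_eq in Hv1 by lra.
      assert (Htt : Rabs t * Rabs t <= Rabs t * 1) by (apply Rmult_le_compat_l; lra).
      assert (Hdw : Rabs d * v <= Rabs t / 2).
      { assert (v * (1 + 2 * Rabs d) = v + 2 * (Rabs d * v)) by ring. lra. }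
      destruct (gauss_bound c f d n t v (Rabs t) hc hf hn ltac:(lra) ltac:(lra) Hdw) as [Gp Gb].
      assert (HG4 : 4 * c * v / (f * Rabs t ^ 2) <= 4 * c / f).
      { replace (4 * c / f) with (4 * c * (Rabs t ^ 2) / (f * Rabs t ^ 2)) by (field; lra).
        unfold Rdiv. apply Rmult_le_compat_r.
        - apply Rlt_le, Rinv_0_lt_compat. apply Rmult_lt_0_compat; [lra|apply pow_lt; lra].
        - assert (v <= Rabs t * Rabs t).
          { assert (v * (1 + 2 * Rabs d) = v + 2 * (Rabs d * v)) by ring.
            assert (0 <= Rabs d * v) by (apply Rmult_le_pos; lra). lra. }
          simpl. rewrite Rmult_1_r. apply Rmult_le_compat_l; lra. }
      destruct (HB0 t v Htv Hv0) as [He _].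
      pose proof (Rabs_triang (G c f d n t v) (eta t v)).
      rewrite (Rabs_pos_eq (G c f d n t v)) in H by lra. lra.
    + rewrite chi_nonpos by auto. destruct (HB0 t v Htv Hv0) as [He _]. lra.
  -
    assert (H0 : exists c' K1 e3, 0 < c' /\ 0 < K1 /\ 0 < e3 /\
        forall v, 0 < v < 1 -> O 0 v ->
          Rabs (chi_of c f d n eta 0 v - c' / v) < K1 / Rpower v (1 - e3)).
    { destruct (Req_dec n 1) as [Hn1|Hn1].
      - exists (c * exp (- (f * d ^ 2))), (Rabs B + 1), (1/2).
        split; [apply Rmult_lt_0_compat; [lra|apply exp_pos]|].
        split; [lra|]. split; [lra|].
        intros v Hv Hov. rewrite chi_pos by lra. unfold G. rewrite Hn1, Rpower_1 by lra.
        replace (- (f / v ^ 2) * (0 + d * v) ^ 2) with (- (f * d ^ 2)) by (field; lra).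
        replace (c / v * exp (- (f * d ^ 2)) + eta 0 v - c * exp (- (f * d ^ 2)) / v)
          with (eta 0 v) by (field; lra).
        destruct (HB0 0 v Hov ltac:(lra)) as [He _].
        pose proof (Rpower_pos v (1 - 1/2)) as HQ0.
        pose proof (Rpower_le1 v (1 - 1/2) ltac:(lra) ltac:(lra)) as HQ1.
        apply div_lt_of; auto.
        assert (Rabs (eta 0 v) * Rpower v (1 - 1/2) <= Rabs (eta 0 v) * 1)
          by (apply Rmult_le_compat_l; [apply Rabs_pos|lra]).
        lra.
      - assert (Hn' : 1 < n) by lra.
        set (e3 := Rmin (1/2) (n - 1)).
        assert (He3 : 0 < e3) by (unfold e3; apply Rmin_pos; lra).
        assert (He3' : e3 <= 1/2 /\ e3 <= n - 1) by (unfold e3; split; [apply Rmin_l|apply Rmin_r]).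
        assert (Hd2 : 0 <= c * f * d ^ 2) by (apply Rmult_le_pos; [nra|apply pow2_ge_0]).
        exists c, (c * f * d ^ 2 + Rabs B + 1), e3.
        split; [lra|]. split; [lra|]. split; [lra|].
        intros v Hv Hov. rewrite chi_pos by lra. unfold G.
        set (P := Rpower v n).
        set (x := f / v ^ 2 * (0 + d * P) ^ 2).
        assert (Hv2 : 0 < v ^ 2) by (apply pow_lt; lra).
        assert (Hx : 0 <= x) by (unfold x; apply Rmult_le_pos; [apply Rlt_le, Rdiv_lt_0_compat; lra|apply pow2_ge_0]).
        replace (- (f / v ^ 2) * (0 + d * P) ^ 2) with (- x) by (unfold x; ring).
        pose proof (exp_ineq1_le (- x)) as HE1.
        assert (HE2 : exp (- x) <= 1) by (rewrite <- exp_0; apply exp_mono; lra).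
        set (E := exp (- x)) in *.
        assert (Hcv : c / v * x = c * f * d ^ 2 * (P ^ 2 / v ^ 3)) by (unfold x; field; lra).
        assert (HPv : P ^ 2 / v ^ 3 = exp ((2 * n - 3) * ln v)).
        { unfold P, Rpower. replace (v ^ 3) with (exp (ln v) ^ 3) by (rewrite exp_ln; lra).
          replace ((2 * n - 3) * ln v) with (n * ln v + n * ln v + - (ln v + ln v + ln v)) by ring.
          rewrite exp_plus, exp_plus, exp_Ropp, exp_plus, exp_plus.
          pose proof (exp_pos (ln v)). pose proof (exp_pos (n * ln v)).
          simpl. field. lra. }
        set (Q := Rpower v (1 - e3)).
        assert (HQ0 : 0 < Q) by apply Rpower_pos.
        assert (HQ1 : Q <= 1) by (apply Rpower_le1; lra).
        assert (HRQ : exp ((2 * n - 3) * ln v) * Q <= 1).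
        { unfold Q, Rpower. rewrite <- exp_plus. apply Rle_trans with (exp 0); [|rewrite exp_0; lra]. apply exp_mono.
          pose proof (ln_nonpos v ltac:(lra)).
          assert (h : 0 <= (2 * n - 2 - e3) * (- ln v)) by (apply Rmult_le_pos; lra).
          replace ((2 * n - 3) * ln v + (1 - e3) * ln v) with (- ((2 * n - 2 - e3) * (- ln v))) by ring.
          lra. }
        pose proof (exp_pos ((2 * n - 3) * ln v)) as HR0.
        destruct (HB0 0 v Hov ltac:(lra)) as [He _].
        apply div_lt_of; auto.
        replace (c / v * E + eta 0 v - c / v) with (c / v * (E - 1) + eta 0 v) by ring.
        assert (Hcv0 : 0 < c / v) by (apply Rdiv_lt_0_compat; lra).
        assert (Hab : Rabs (c / v * (E - 1)) <= c * f * d ^ 2 * exp ((2 * n - 3) * ln v)).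
        { rewrite <- HPv, <- Hcv. apply Rabs_le. split; nra. }
        pose proof (Rabs_triang (c / v * (E - 1)) (eta 0 v)).
        apply Rle_lt_trans with ((c * f * d ^ 2 * exp ((2 * n - 3) * ln v) + Rabs B) * Q).
        + apply Rmult_le_compat_r; lra.
        + assert (Rabs B * Q <= Rabs B * 1) by (apply Rmult_le_compat_l; lra).
          assert (c * f * d ^ 2 * (exp ((2 * n - 3) * ln v) * Q) <= c * f * d ^ 2 * 1)
            by (apply Rmult_le_compat_l; lra).
          nra. }
    destruct H0 as [c' [K1 [e3 [Hc' [HK1 [He3 H0]]]]]].
    exists c', K1, (2 * c * (f + 1) + Rabs B + 1), e3.
    split; [lra|]. split; [lra|]. split; [nra|]. split; [lra|].
    intros t v [[[Htv [Ht1 Hv1]] Hv0] _] Hvne.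
    assert (Hvp : 0 < v) by lra.
    rewrite Rabs_pos_eq in Hv1 by lra.
    split.
    + intros [[[H0v _] _] _]. apply H0; auto.
    + destruct (HC t v Htv) as [Hext _].
      rewrite (proj2 (dt_chi c f d n eta t v Hvp Hext)).
      pose proof (Gt_bound c f d n t v hc hf Hvp) as HGt.
      destruct (HB0 t v Htv Hv0) as [_ Hde].
      assert (Hv2 : 0 < v ^ 2) by (apply pow_lt; lra).
      assert (Hv21 : v ^ 2 <= 1) by (simpl; nra).
      assert (HiB : 1 <= / v ^ 2) by (rewrite <- Rinv_1; apply Rinv_le_contravar; lra).
      assert (HiB2 : Rabs B <= Rabs B / v ^ 2).
      { unfold Rdiv. rewrite <- (Rmult_1_r (Rabs B)) at 1. apply Rmult_le_compat_l; lra. }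
      assert (Hi0 : 0 < 1 / v ^ 2) by (apply Rdiv_lt_0_compat; lra).
      replace ((2 * c * (f + 1) + Rabs B + 1) / v ^ 2)
        with (2 * c * (f + 1) / v ^ 2 + Rabs B / v ^ 2 + 1 / v ^ 2) by (field; lra).
      pose proof (Rabs_triang (Gt c f d n t v) (dt eta t v)). lra.
  - intros e He. exists e. split; auto. intros t [Ht1 Ht2].
    rewrite Rinv_div. unfold Rdiv. rewrite Rabs_mult, Rabs_Rinv by lra.
    rewrite (Rabs_pos_eq (Rabs t)) by apply Rabs_pos.
    rewrite (Rabs_pos_eq (1 + 2 * Rabs d)) by lra.
    apply Rle_lt_trans with (Rabs t * 1); [|lra].
    apply Rmult_le_compat_l; [apply Rabs_pos|].
    rewrite <- Rinv_1. apply Rinv_le_contravar; lra.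
Qed.
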